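(* For all positive integers $d,t,k,w$ with $dt+1\le k$, there is a $t$-private $k$-server PIR protocol for databases of $N$ records, each record being $w(k-dt)\lceil\log_2k\rceil$ bits long, such that the upload cost is $O(k^3\log k\cdot N^{1/d})$ bits and the download cost is $wk\lceil\log_2k\rceil$ bits. Consequently its download rate is $1-dt/k$.
   Context: A $t$-private $k$-server private information retrieval (PIR) protocol for databases in $\mathcal{Y}^N$ (replicated at all $k$ servers) lets a client retrieve the $i$-th symbol for any $i\in[N]$ so that the client's messages to any $t$ servers have a distribution independent of $i$. Equivalently it is a $t$-private $k$-server HSS with $m=1$ input $i\in[N]$ for the class of all functions $f:[N]\to\mathcal{Y}$ (the database): the client shares $i$ with $\mathsf{Share}$, each server returns $\mathsf{Eval}(f,j,\text{its share})$, and the client runs $\mathsf{Rec}$ to obtain $f(i)$ with probability 1. Upload cost is the total bit length of the input shares; download cost is the total bit length of the output shares; download rate is $\log_2|\mathcal{Y}|$ divided by the download cost. *)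

(* Defs.v *)
From mathcomp Require Import all_boot.
From Stdlib Require Import Reals.
Set Implicit Arguments.
Unset Strict Implicit.
Unset Printing Implicit Defensive.

(* A k-server PIR protocol (= HSS with one input i : 'I_N for the class of
   all databases f : 'I_N -> Y), where Y = L-bit records.
   The client's randomness is uniform over a finite nonempty type [rand]. *)
Record PIR (k N L : nat) := MkPIR {
  rand : finType;
  share : 'I_N -> rand -> 'I_k -> seq bool;
  eval : 'I_k -> {ffun 'I_N -> L.-tuple bool} -> seq bool -> seq bool;
  recon : 'I_N -> rand -> ('I_k -> seq bool) -> L.-tuple bool
}.

Arguments rand {k N L} p.
Arguments share {k N L} p _ _ _.
Arguments eval {k N L} p _ _ _.
Arguments recon {k N L} p _ _ _.

Section PIRdefs.
Variables (k N L : nat) (P : PIR k N L).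

Definition pir_nonempty_rand : Prop := 0 < #|rand P|.

Definition pir_correct : Prop :=
  forall (f : {ffun 'I_N -> L.-tuple bool}) (i : 'I_N) (r : rand P),
    recon P i r (fun j => eval P j f (share P i r j)) = f i.

(* t-privacy: for every set T of at most t servers, the joint distribution of
   the messages to T (under uniform r) does not depend on i. *)
Definition pir_private (t : nat) : Prop :=
  forall (T : {set 'I_k}), #|T| <= t ->
  forall (i i' : 'I_N) (v : 'I_k -> seq bool),
    #|[set r : rand P | [forall j in T, share P i r j == v j]]| =
    #|[set r : rand P | [forall j in T, share P i' r j == v j]]|.

Definition is_PIR (t : nat) : Prop :=
  [/\ pir_nonempty_rand, pir_correct & pir_private t].

Definition upload : nat :=
  \max_(i : 'I_N) \max_(r : rand P) \sum_(j < k) size (share P i r j).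

Definition download : nat :=
  \max_(f : {ffun 'I_N -> L.-tuple bool}) \max_(i : 'I_N) \max_(r : rand P)
    \sum_(j < k) size (eval P j f (share P i r j)).

(* download rate = log2 |Y| / download cost = L / download *)
Definition download_rate : R := (INR L / INR download)%R.

End PIRdefs.

Definition clog2 (k : nat) : nat := up_log 2 k.

(* Main.v *)
Require Import Defs.
From mathcomp Require Import all_boot all_algebra finfield zify.
From Stdlib Require Import Reals Lra.
Delimit Scope nat_scope with N.
Delimit Scope R_scope with R.
Set Implicit Arguments.
Unset Strict Implicit.
Unset Printing Implicit Defensive.


Lemma INR_expn a b : INR (expn a b) = (INR a ^ b)%R.
Proof.
elim: b => [|b IH]; first by rewrite expn0.
by rewrite expnS mult_INR IH.
Qed.

Section RealB.
Local Open Scope R_scope.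

Lemma m_bound (m k : nat) : (2 <= k)%nat -> (0 < m)%nat -> (expn 2 m.-1 < k)%nat ->
  INR m <= 4 * ln (INR k).
Proof.
move=> k2 m0 hm.
have hk : 2 <= INR k by apply: (le_INR 2); apply/leP.
have l2 := ln_lt_2.
have lnk : ln 2 <= ln (INR k).
  case: (Rle_lt_or_eq_dec _ _ hk) => h; last by rewrite h; lra.
  by left; apply: ln_increasing; lra.
have h1 : INR (expn 2 m.-1) < INR k by apply: lt_INR; apply/ltP.
have e2 : INR 2 = 2 by simpl; ring.
rewrite INR_expn e2 in h1.
have h2 : ln (2 ^ m.-1) < ln (INR k).
  by apply: ln_increasing => //; apply: pow_lt; lra.
rewrite ln_pow in h2; last by lra.
have hm1 : INR m = INR m.-1 + 1.
  by rewrite -{1}(prednK m0) S_INR.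
have pos : 0 <= INR m.-1 by apply: pos_INR.
have h3 : 0 <= INR m.-1 * (ln 2 - / 2) by apply: Rmult_le_pos; lra.
rewrite hm1; nra.
Qed.

Lemma n_bound (n N d : nat) : (0 < d)%nat -> (0 < N)%nat -> (0 < n)%nat -> (expn (n.-1) d < N)%nat ->
  INR n <= 2 * Rpower (INR N) (/ INR d).
Proof.
move=> d0 N0 n0 hn.
have hN : 1 <= INR N by apply: (le_INR 1); apply/leP.
have hd : 0 < INR d by apply: lt_0_INR; apply/ltP.
set P := Rpower (INR N) (/ INR d).
have P1 : 1 <= P.
  have lN : 0 <= ln (INR N).
    case: (Rle_lt_or_eq_dec _ _ hN) => h; last by rewrite -h ln_1; lra.
    by rewrite -ln_1; left; apply: ln_increasing; lra.
  rewrite /P /Rpower; have := exp_ineq1_le (/ INR d * ln (INR N)).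
  have : 0 <= / INR d * ln (INR N).
    by apply: Rmult_le_pos => //; left; apply: Rinv_0_lt_compat.
  lra.
have hlt : INR n.-1 < P.
  apply: Rnot_le_lt => hle.
  have e : P ^ d = INR N.
    rewrite -Rpower_pow; last by lra.
    rewrite /P Rpower_mult Rinv_l; last by lra.
    by apply: Rpower_1; lra.
  have : P ^ d <= INR n.-1 ^ d by apply: pow_incr; lra.
  rewrite e -INR_expn => h.
  have : INR (expn n.-1 d) < INR N by apply: lt_INR; apply/ltP.
  lra.
have : INR n = INR n.-1 + 1 by rewrite -{1}(prednK n0) S_INR.
lra.
Qed.

Lemma prod_bound (K M Lk D Nn L P : R) :
  0 <= M <= 4 * L -> 0 <= Lk <= K -> 0 <= D <= K -> 0 <= Nn <= 2 * P -> 0 <= K ->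
  K * (M * Lk * (D * Nn)) <= 8 * K ^ 3 * L * P.
Proof.
move=> [m0 m1] [l0 l1] [d0 d1] [n0 n1] k0.
have a : M * Lk <= 4 * L * K by apply: Rmult_le_compat.
have b : D * Nn <= K * (2 * P) by apply: Rmult_le_compat.
have c : M * Lk * (D * Nn) <= (4 * L * K) * (K * (2 * P)).
  apply: Rmult_le_compat => //; by apply: Rmult_le_pos.
have : K * (M * Lk * (D * Nn)) <= K * ((4 * L * K) * (K * (2 * P))).
  by apply: Rmult_le_compat_l.
have -> : K * (4 * L * K * (K * (2 * P))) = 8 * K ^ 3 * L * P by ring.
by [].
Qed.

End RealB.

Lemma rate_eq (w l m k dt : nat) : (0 < w)%nat -> (0 < m)%nat -> (0 < k)%nat -> (dt + l = k)%nat ->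
  (INR (w * l * m) / INR (k * (m * w)) = 1 - INR dt / INR k)%R.
Proof.
move=> w0 m0 k0 e.
have hw : INR w <> 0%R by apply: not_0_INR; apply/eqP; rewrite -lt0n.
have hm : INR m <> 0%R by apply: not_0_INR; apply/eqP; rewrite -lt0n.
have hk : INR k <> 0%R by apply: not_0_INR; apply/eqP; rewrite -lt0n.
have el : INR l = (INR k - INR dt)%R by rewrite -e plus_INR; ring.
rewrite !mult_INR el; field; auto.
Qed.

From mathcomp Require Import ring.
Delimit Scope ring_scope with R.
Import GRing.Theory.

Module M_Alg.
Local Open Scope ring_scope.


Section Trunc.
Variables (F : fieldType) (l : nat).
Local Notation A := {poly F}.

Definition tr (a : A) : A := \poly_(e < l) a`_e.

Lemma coef_tr a e : (tr a)`_e = if (e < l)%N then a`_e else 0.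
Proof. by rewrite coef_poly. Qed.

Lemma trD a b : tr (a + b) = tr a + tr b.
Proof. by apply/polyP=> e; rewrite coefD !coef_tr coefD; case: ifP; rewrite ?addr0. Qed.

Lemma trN a : tr (- a) = - tr a.
Proof. by apply/polyP=> e; rewrite coefN !coef_tr coefN; case: ifP; rewrite ?oppr0. Qed.

Lemma trB a b : tr (a - b) = tr a - tr b.
Proof. by rewrite trD trN. Qed.

Lemma tr0 : tr 0 = 0.
Proof. by apply/polyP=> e; rewrite coef_tr coef0; case: ifP. Qed.

Lemma tr_sum (I : Type) (s : seq I) (P : pred I) (f : I -> A) :
  tr (\sum_(i <- s | P i) f i) = \sum_(i <- s | P i) tr (f i).
Proof. exact: (big_morph tr trD tr0). Qed.

Lemma tr_tr a : tr (tr a) = tr a.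
Proof. by apply/polyP=> e; rewrite !coef_tr; case: (e < l)%N. Qed.

Lemma trM a b : tr (a * b) = tr (tr a * tr b).
Proof.
apply/polyP=> e; rewrite !coef_tr; case: ifP => // el; rewrite !coefM.
apply: eq_bigr => j _; rewrite !coef_tr.
have jl : (j < l)%N by apply: leq_ltn_trans el; rewrite -ltnS.
have jl2 : (e - j < l)%N by apply: leq_ltn_trans el; apply: leq_subr.
by rewrite jl jl2.
Qed.

Lemma trMl a b : tr (a * b) = tr (tr a * b).
Proof. by rewrite trM [RHS]trM tr_tr. Qed.

Lemma trMr a b : tr (a * b) = tr (a * tr b).
Proof. by rewrite trM [RHS]trM tr_tr. Qed.

Lemma trXn a : tr (a * 'X^l) = 0.
Proof.
by apply/polyP=> e; rewrite coef_tr coef0 coefMXn; case: (e < l)%N.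
Qed.

Lemma tr_prod (I : Type) (s : seq I) (P : pred I) (f : I -> A) :
  tr (\prod_(i <- s | P i) f i) = tr (\prod_(i <- s | P i) tr (f i)).
Proof.
elim/big_rec2: _ => [//|i y1 y2 _ IH].
by rewrite trMr IH -trMr trMl.
Qed.

Definition chi (a : A) : F := a`_(l.-1).

Lemma chi_tr a : (0 < l)%N -> chi (tr a) = chi a.
Proof. by move=> l0; rewrite /chi coef_tr prednK ?leqnn // ltn_predL. Qed.

End Trunc.

End M_Alg.
Import M_Alg.

Module M_Alg2.
Local Open Scope ring_scope.


Section Form.
Variables (F : fieldType).
Local Notation A := {poly F}.

Definition uu : {poly A} := 1 - ('X : A)%:P * 'X.

Definition form (D : nat) (c : A) (p : {poly A}) :=
  exists H : {poly A}, (size H <= D)%N /\ p = c%:P * 'X^D + uu * H.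

Lemma size_X2 : size ('X : {poly A}) = 2%N.
Proof. exact: size_polyX. Qed.

Lemma size_uu : (size uu <= 2)%N.
Proof.
apply: leq_trans (size_polyD _ _) _; rewrite size_polyN geq_max size_poly1 /=.
apply: leq_trans (size_polyMleq _ _) _; rewrite size_X2.
move: (size_polyC_leq1 ('X : A)) => h; rewrite addnS /= addn1 ltnS; exact: h.
Qed.

Lemma size_mulle (p q : {poly A}) a b :
  (size p <= a)%N -> (size q <= b)%N -> (size (p * q)%R <= (a + b).-1)%N.
Proof. move=> ha hb; apply: leq_trans (size_polyMleq _ _) _; lia. Qed.

Lemma form0 D : form D 0 0.
Proof. by exists 0; rewrite size_poly0 mulr0 addr0 mul0r. Qed.

Lemma formD D c1 c2 p1 p2 : form D c1 p1 -> form D c2 p2 -> form D (c1 + c2) (p1 + p2).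
Proof.
move=> [H1 [s1 ->]] [H2 [s2 ->]]; exists (H1 + H2); split.
  by apply: leq_trans (size_polyD _ _) _; rewrite geq_max s1 s2.
by rewrite polyCD; ring.
Qed.

Lemma formZ D a c p : form D c p -> form D (a * c) (a%:P * p).
Proof.
move=> [H [s ->]]; exists (a%:P * H); split.
  by apply: leq_trans (size_mulle (size_polyC_leq1 a) s) _; rewrite add1n.
by rewrite polyCM; ring.
Qed.

Lemma form_sum D (I : Type) (s : seq I) (P : pred I) (c : I -> A) (p : I -> {poly A}) :
  (forall i, P i -> form D (c i) (p i)) ->
  form D (\sum_(i <- s | P i) c i) (\sum_(i <- s | P i) p i).
Proof.
move=> h; elim/big_rec2: _ => [|i y1 y2 Pi IH]; first exact: form0.
exact: formD (h i Pi) IH.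
Qed.

Lemma form_prod t (I : Type) (s : seq I) (dl : I -> A) (R : I -> {poly A}) :
  (forall i, (size (R i) <= t)%N) ->
  form (size s * t) (\prod_(i <- s) dl i)
       (\prod_(i <- s) ((dl i)%:P * 'X^t + uu * R i)).
Proof.
move=> hR; elim: s => [|i s [H [sH eH]]].
  by exists 0; rewrite !big_nil size_poly0 mulr0 addr0 mul0n expr0 mulr1 polyC1.
rewrite !big_cons eH /=.
exists ((dl i)%:P * 'X^t * H + R i * ((\prod_(j <- s) dl j)%:P * 'X^(size s * t))
         + uu * R i * H); split.
  have h1 : (size ((dl i)%:P * 'X^t * H)%R <= t + size s * t)%N.
    apply: leq_trans (size_mulle (size_mulle (size_polyC_leq1 (dl i)) (leqnn (size ('X^t : {poly A})))) sH) _.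
    rewrite size_polyXn; lia.
  have h2 : (size (R i * ((\prod_(j <- s) dl j)%:P * 'X^(size s * t)))%R <= t + size s * t)%N.
    apply: leq_trans (size_mulle (hR i) (size_mulle (size_polyC_leq1 (\prod_(j <- s) dl j))
                                 (leqnn (size ('X^(size s * t) : {poly A}))))) _.
    rewrite size_polyXn; lia.
  have h3 : (size (uu * R i * H)%R <= t + size s * t)%N.
    apply: leq_trans (size_mulle (size_mulle size_uu (hR i)) sH) _; lia.
  rewrite mulSn; apply: leq_trans (size_polyD _ _) _; rewrite geq_max h3 andbT.
  by apply: leq_trans (size_polyD _ _) _; rewrite geq_max h1 h2.
rewrite mulSn exprD polyCM; ring.
Qed.

End Form.

End M_Alg2.
Import M_Alg2.

Module M_Alg3.
Local Open Scope ring_scope.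


Section Key.
Variables (F : fieldType) (l : nat).
Hypothesis l0 : (0 < l)%N.
Local Notation A := {poly F}.

Definition Wf (x : A) : A := \sum_(c < l) ('X * x) ^+ c.

Lemma W_u x : (1 - 'X * x) * Wf x = 1 - ('X * x) ^+ l.
Proof.
have := subrXX 1 ('X * x) l; rewrite expr1n => ->; congr (_ * _).
by apply: eq_bigr => i _; rewrite expr1n mul1r.
Qed.

Lemma chiD (a b : A) : chi l (a + b) = chi l a + chi l b.
Proof. by rewrite /chi coefD. Qed.
Lemma chiB (a b : A) : chi l (a - b) = chi l a - chi l b.
Proof. by rewrite /chi coefB. Qed.
Lemma chi_sum (I : Type) (s : seq I) (P : pred I) (f : I -> A) :
  chi l (\sum_(i <- s | P i) f i) = \sum_(i <- s | P i) chi l (f i).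
Proof. by rewrite /chi coef_sum. Qed.

Lemma key D c (p : {poly A}) : form D c p ->
  exists G : {poly F}, [/\ (size G <= D + l)%N,
    (forall e, (e < l)%N -> G`_(D + e) = c`_(l.-1 - e)) &
    forall a : F, chi l (Wf a%:P * p.[a%:P]) = G.[a]].
Proof.
move=> [H [sH ->]].
exists (\poly_(e < D + l) (if (e < D)%N then (H`_e)`_(l.-1) else c`_(l.-1 - (e - D)))).
split.
- exact: size_poly.
- move=> e el; rewrite coef_poly ltn_add2l el ltnNge leq_addr /=.
  by rewrite addKn.
move=> a.
have -> : Wf a%:P * (c%:P * 'X^D + uu F * H).[a%:P]
   = c * a%:P ^+ D * Wf a%:P + (1 - ('X * a%:P) ^+ l) * H.[a%:P].
  rewrite /uu !hornerE -W_u; ring.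
rewrite chiD mulrBl mul1r chiB.
have -> : chi l (('X * a%:P) ^+ l * H.[a%:P]) = 0.
  by rewrite /chi exprMn -mulrA coefXnM prednK // leqnn.
rewrite subr0 (horner_coef_wide _ (size_poly _ _)) big_split_ord /= addrC.
congr (_ + _).
  rewrite /Wf mulr_sumr chi_sum; apply: eq_bigr => i _.
  rewrite coef_poly /= ltn_add2l ltn_ord ltnNge leq_addr /= addKn.
  have -> : c * a%:P ^+ D * ('X * a%:P) ^+ i = (c * 'X^i) * (a ^+ (D + i))%:P.
    by rewrite rmorphXn exprMn exprD; ring.
  rewrite /chi coefMC coefMXn.
  have -> : (l.-1 < i)%N = false.
    by apply/negbTE; rewrite -leqNgt -ltnS prednK.
  by [].
rewrite (horner_coef_wide _ sH) chi_sum; apply: eq_bigr => i _.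
rewrite coef_poly /= ltn_addr // ltn_ord -rmorphXn /chi coefMC.
by [].
Qed.

End Key.

End M_Alg3.
Import M_Alg3.

Module M_Alg4.
Local Open Scope ring_scope.


Lemma size_index_enum (T : finType) : size (index_enum T) = #|T|.
Proof. by rewrite [index_enum T]unlock -enumT -cardT. Qed.

Section PolyOf.
Variable (R : nzRingType).
Definition polyOf m (g : 'I_m -> R) : {poly R} :=
  \poly_(e < m) (if insub e is Some i then g i else 0).

Lemma coef_polyOf m (g : 'I_m -> R) (i : 'I_m) : (polyOf g)`_i = g i.
Proof. by rewrite coef_poly ltn_ord (valK i). Qed.

Lemma coef_polyOf_ge m (g : 'I_m -> R) e : (m <= e)%N -> (polyOf g)`_e = 0.
Proof. by rewrite coef_poly leqNgt => /negbTE ->. Qed.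

Lemma size_polyOf m (g : 'I_m -> R) : (size (polyOf g) <= m)%N.
Proof. exact: size_poly. Qed.

Lemma polyOfD m (g h : 'I_m -> R) : polyOf (fun i => g i + h i) = polyOf g + polyOf h.
Proof.
apply/polyP=> e; rewrite coefD /polyOf !coef_poly.
by case: (e < m)%N; case: (insub e : option 'I_m) => [i|]; rewrite ?addr0.
Qed.

Lemma size_mulle' (p q : {poly R}) a b :
  (size p <= a)%N -> (size q <= b)%N -> (size (p * q)%R <= (a + b).-1)%N.
Proof. move=> ha hb; apply: leq_trans (size_polyMleq _ _) _; lia. Qed.

Lemma size_prod_le2 (I : Type) (s : seq I) (P : pred I) (f : I -> {poly R}) :
  (forall i, (size (f i) <= 2)%N) -> (size (\prod_(i <- s | P i) f i)%R <= (size s).+1)%N.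
Proof.
move=> hf; elim: s => [|i s IH]; first by rewrite big_nil size_poly1.
rewrite big_cons; case: (P i); last by apply: leq_trans IH _.
apply: leq_trans (size_polyMleq _ _) _.
have := hf i; move: IH; rewrite /=; lia.
Qed.
End PolyOf.

Section Lag.
Variables (F : fieldType) (k : nat) (al : 'I_k -> F).
Hypothesis al_inj : injective al.

Definition lag (T : {set 'I_k}) (j : 'I_k) : {poly F} :=
  \prod_(j' in T :\ j) (('X - (al j')%:P) * ((al j - al j')^-1)%:P).

Lemma size_lag (T : {set 'I_k}) (j : 'I_k) : j \in T -> (size (lag T j) <= #|T|)%N.
Proof.
move=> jT; rewrite /lag -big_enum /=.
apply: leq_trans (size_prod_le2 _ _ _) _.
  move=> i; apply: leq_trans (size_mulle' (eq_leq (size_XsubC _)) (size_polyC_leq1 _)) _.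
  by [].
by rewrite -cardE (cardsD1 j T) jT.
Qed.

Lemma lag_eval (T : {set 'I_k}) (j j0 : 'I_k) : j0 \in T -> (lag T j).[al j0] = (j == j0)%:R.
Proof.
move=> j0T; rewrite /lag horner_prod.
case: eqP => [<-|/eqP nj].
  rewrite /= big1 // => i; rewrite in_setD1 => /andP [ij _].
  rewrite !hornerE mulfV // subr_eq0; apply/eqP => /al_inj e.
  by rewrite e eqxx in ij.
rewrite /= (bigD1 j0) /=; last by rewrite in_setD1 eq_sym nj j0T.
by rewrite !hornerE subrr !mul0r.
Qed.

Definition interp (y : 'I_k -> F) : {poly F} := \sum_(j : 'I_k) (y j)%:P * lag setT j.

Lemma interp_unique (y : 'I_k -> F) (G : {poly F}) :
  (size G <= k)%N -> (forall j, G.[al j] = y j) -> G = interp y.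
Proof.
move=> sG hG; apply/eqP; rewrite -subr_eq0; apply/eqP.
apply: (@roots_geq_poly_eq0 _ _ [seq al j | j <- enum 'I_k]).
- apply/allP => x /mapP [j _ ->]; rewrite /root hornerD hornerN hG.
  rewrite /interp horner_sum (bigD1 j) //= big1 => [|j' nj].
    by rewrite hornerM hornerC lag_eval ?inE // eqxx mulr1 addr0 subrr.
  by rewrite hornerM lag_eval ?inE // (negbTE nj) mulr0.
- by rewrite map_inj_uniq ?enum_uniq.
rewrite size_map size_enum_ord.
apply: leq_trans (size_polyD _ _) _; rewrite size_polyN geq_max sG /=.
rewrite /interp; apply: leq_trans (size_sum _ _ _) _.
apply/bigmax_leqP => j _; apply: leq_trans (size_polyMleq _ _) _.
have := size_polyC_leq1 (y j); have := @size_lag setT j (in_setT j).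
rewrite cardsT card_ord; lia.
Qed.

End Lag.

End M_Alg4.
Import M_Alg4.

Module M_Alg5.
Local Open Scope ring_scope.


Lemma eq_polyOf (R : nzRingType) m (g h : 'I_m -> R) :
  (forall i, g i = h i) -> polyOf g = polyOf h.
Proof.
move=> e; apply/polyP => x; rewrite /polyOf !coef_poly.
by case: (x < m)%N; case: (insub x : option 'I_m) => [i|]; rewrite ?e.
Qed.

Section Scheme.
Variables (F : fieldType) (l t d n N k : nat) (al : 'I_k -> F)
  (code : 'I_N -> {ffun 'I_d -> 'I_n}).
Hypotheses (l0 : (0 < l)%N) (al_inj : injective al) (code_inj : injective code).
Local Notation A := {poly F}.
Local Notation K := {ffun 'I_l -> F}.

Definition lift (x : K) : A := polyOf (fun e => x e).
Definition low (a : A) : K := [ffun e : 'I_l => a`_e].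

Lemma lift_low a : lift (low a) = tr l a.
Proof.
apply/polyP => e; rewrite /lift /polyOf coef_poly coef_tr.
case: ltnP => // el.
by rewrite (insubT (fun x => (x < l)%N) el) ffunE.
Qed.

Lemma low_tr a : low (tr l a) = low a.
Proof. by apply/ffunP => e; rewrite !ffunE coef_tr ltn_ord. Qed.

Lemma low_eq a b : tr l a = tr l b -> low a = low b.
Proof. by move=> e; rewrite -low_tr e low_tr. Qed.

Definition Rnd := {ffun ('I_d * 'I_n) -> {ffun 'I_t -> K}}.
Definition Sh := {ffun ('I_d * 'I_n) -> K}.

Definition E (i : 'I_N) (z : 'I_d * 'I_n) : A := (z.2 == code i z.1)%:R.
Definition Rpol (r : Rnd) z : {poly A} := polyOf (fun b => lift (r z b)).
Definition Pz i (r : Rnd) z : {poly A} := (E i z)%:P * 'X^t + uu F * Rpol r z.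
Definition shareF i (r : Rnd) (a : F) : Sh := [ffun z => low (Pz i r z).[a%:P]].
Definition ansF (fc : 'I_N -> K) (a : F) (s : Sh) : F :=
  chi l (Wf l a%:P * \sum_(i : 'I_N) lift (fc i) * \prod_(x : 'I_d) lift (s (x, code i x))).

Lemma Pz_eval i r z x :
  (Pz i r z).[x] = E i z * x ^+ t + (1 - 'X * x) * (Rpol r z).[x].
Proof. by rewrite /Pz /uu !hornerE. Qed.

Lemma indicator (fc : 'I_N -> K) (i0 : 'I_N) :
  \sum_(i : 'I_N) lift (fc i) * \prod_(x : 'I_d) E i0 (x, code i x) = lift (fc i0).
Proof.
rewrite (bigD1 i0) //=.
have -> : \prod_(x < d) E i0 (x, code i0 x) = 1 by apply: big1 => x _; rewrite /E /= eqxx.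
rewrite mulr1 big1 ?addr0 // => i ni.
have [x hx] : exists x, code i x != code i0 x.
  apply/existsP; rewrite -negb_forall; apply/negP => /forallP h.
  by move/negP: ni; apply; apply/eqP/code_inj/ffunP => x; apply/eqP.
by rewrite (bigD1 x) //= /E /= (negbTE hx) mul0r mulr0.
Qed.

Lemma correct (fc : 'I_N -> K) (i0 : 'I_N) (r : Rnd) :
  exists G : {poly F}, [/\ (size G <= d * t + l)%N,
   (forall e : 'I_l, G`_(d * t + (l.-1 - e)) = fc i0 e) &
   forall a, ansF fc a (shareF i0 r a) = G.[a]].
Proof.
set p := \sum_(i : 'I_N) (lift (fc i))%:P * \prod_(x : 'I_d) Pz i0 r (x, code i x).
have hf : form (d * t) (lift (fc i0)) p.
  rewrite -(indicator fc i0) /p; apply: form_sum => i _.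
  apply: formZ.
  have := @form_prod F t _ (index_enum 'I_d) (fun x => E i0 (x, code i x))
     (fun x => Rpol r (x, code i x)) (fun x => size_polyOf _).
  by rewrite size_index_enum card_ord.
have [G [sG cG eG]] := key l0 hf.
exists G; split => //.
  move=> e; rewrite cG; last by apply: leq_ltn_trans (leq_subr _ _) _; rewrite ltn_predL.
  rewrite subKn; last by rewrite -ltnS prednK.
  exact: coef_polyOf.
move=> a; rewrite -eG /ansF -[LHS]chi_tr // -[RHS]chi_tr //.
congr (chi l _).
rewrite trMr [RHS]trMr; congr (tr l (_ * _)).
rewrite /p horner_sum !tr_sum; apply: eq_bigr => i _.
rewrite hornerM hornerC horner_prod trMr [RHS]trMr; congr (tr l (_ * _)).
rewrite [RHS]tr_prod tr_prod; congr (tr l _); apply: eq_bigr => x _.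
by rewrite ffunE lift_low tr_tr.
Qed.


Definition radd (r dl : Rnd) : Rnd := [ffun z => [ffun b => [ffun e => r z b e + dl z b e]]].
Definition rsub (r dl : Rnd) : Rnd := [ffun z => [ffun b => [ffun e => r z b e - dl z b e]]].

Lemma radd_inj dl : injective (radd ^~ dl).
Proof.
apply: (can_inj (g := rsub ^~ dl)) => r.
by apply/ffunP => z; apply/ffunP => b; apply/ffunP => e; rewrite !ffunE addrK.
Qed.

Definition tg i i' z (j : 'I_k) : A := (E i z - E i' z) * (al j)%:P ^+ t * Wf l (al j)%:P.
Definition Dz i i' (T : {set 'I_k}) z : {poly A} :=
  \sum_(j in T) (tg i i' z j)%:P * map_poly polyC (lag al T j).
Definition dl i i' T : Rnd := [ffun z : 'I_d * 'I_n => [ffun b : 'I_t => low ((Dz i i' T z)`_b)]].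

Lemma tr_horner_polyOf (D : {poly A}) x :
  (size D <= t)%N -> tr l (polyOf (fun b : 'I_t => tr l D`_b)).[x] = tr l D.[x].
Proof.
move=> sD; rewrite (horner_coef_wide _ (size_polyOf _)) (horner_coef_wide _ sD) !tr_sum.
by apply: eq_bigr => b _; rewrite coef_polyOf [RHS]trMl.
Qed.

Lemma priv_shift i i' (T : {set 'I_k}) r j : (#|T| <= t)%N -> j \in T ->
  shareF i' (radd r (dl i i' T)) (al j) = shareF i r (al j).
Proof.
move=> cT jT; apply/ffunP => z; rewrite !ffunE; apply: low_eq.
set x := (al j)%:P.
have sD : (size (Dz i i' T z) <= t)%N.
  apply: leq_trans (size_sum _ _ _) _; apply/bigmax_leqP => j' j'T.
  apply: leq_trans (size_mulle' (size_polyC_leq1 _) (_ : (size (map_poly polyC (lag al T j')) <= #|T|)%N)) _.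
    by rewrite size_map_polyC; apply: size_lag.
  by rewrite add1n.
have eD : (Dz i i' T z).[x] = tg i i' z j.
  rewrite /Dz horner_sum (bigD1 j) //= big1 => [|j' /andP [_ nj]].
    by rewrite hornerM hornerC horner_map /= lag_eval // eqxx addr0 mulr1.
  by rewrite hornerM hornerC horner_map /= lag_eval // (negbTE nj) mulr0.
have eR : Rpol (radd r (dl i i' T)) z = Rpol r z + polyOf (fun b : 'I_t => tr l (Dz i i' T z)`_b).
  apply/polyP => e; rewrite coefD /Rpol /polyOf !coef_poly.
  case: (e < t)%N; last by rewrite addr0.
  case: (insub e : option 'I_t) => [b|]; last by rewrite addr0.
  rewrite -lift_low /lift /polyOf; apply/polyP => e'; rewrite coefD !coef_poly.
  case: (e' < l)%N; last by rewrite addr0.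
  case: (insub e' : option 'I_l) => [c|]; last by rewrite addr0.
  by rewrite !ffunE.
rewrite !Pz_eval eR hornerD mulrDr addrA trD.
rewrite trMr tr_horner_polyOf // -trMr eD /tg.
have -> : (1 - 'X * x) * ((E i z - E i' z) * x ^+ t * Wf l x)
   = (E i z - E i' z) * x ^+ t - (E i z - E i' z) * x ^+ t * x ^+ l * 'X^l.
  by rewrite mulrCA -mulrA W_u exprMn; ring.
rewrite trB trXn subr0 -trD; congr (tr l _); ring.
Qed.

End Scheme.

End M_Alg5.
Import M_Alg5.


Section Bij.
Variables (X Y : finType).
Definition fbij (h : #|X| = #|Y|) (x : X) : Y := enum_val (cast_ord h (enum_rank x)).
Definition finj (h : #|X| <= #|Y|) (x : X) : Y := enum_val (widen_ord h (enum_rank x)).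
Lemma finj_inj (h : #|X| <= #|Y|) : injective (finj h).
Proof.
move=> x y /enum_val_inj /(congr1 val) /= e.
by apply: enum_rank_inj; apply: val_inj.
Qed.
End Bij.
Lemma fbijK (X Y : finType) (h : #|X| = #|Y|) : cancel (fbij h) (fbij (esym h)).
Proof. by move=> x; rewrite /fbij enum_valK cast_ordK enum_rankK. Qed.

Section Enc.
Variables (X : finType) (b : nat) (h : #|X| = #|{: b.-tuple bool}|).
Definition encS (x : X) : seq bool := val (fbij h x).
Definition decS (s : seq bool) : X := fbij (esym h) (insubd (nseq_tuple b false) s).
Lemma encSK x : decS (encS x) = x.
Proof. by rewrite /decS /encS valKd fbijK. Qed.
Lemma size_encS x : size (encS x) = b.
Proof. exact: size_tuple. Qed.
End Enc.

Lemma maxc (I : finType) (F : I -> nat) c (x0 : I) : (forall i, F i = c) -> \max_(i : I) F i = c.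
Proof.
move=> h; have hI : 0 < #|I| by apply/card_gt0P; exists x0.
have [i0 ->] := @eq_bigmax I F hI.
exact: h.
Qed.

Section Protocol.
Variables (Fm : finFieldType) (m l t d n N k w L : nat).
Hypotheses (l0 : 0 < l) (kdl : d * t + l = k) (N0 : 0 < N).
Variables (hk : k <= #|Fm|) (hN : #|'I_N| <= #|{ffun 'I_d -> 'I_n}|)
  (hSh : #|{ffun ('I_d * 'I_n) -> {ffun 'I_l -> Fm}}| = #|{: (m * l * (d * n)).-tuple bool}|)
  (hAns : #|{ffun 'I_w -> Fm}| = #|{: (m * w).-tuple bool}|)
  (hRec : #|{ffun 'I_w -> {ffun 'I_l -> Fm}}| = #|{: L.-tuple bool}|).

Definition alp (j : 'I_k) : Fm := enum_val (widen_ord hk j).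
Lemma alp_inj : injective alp.
Proof. by move=> x y /enum_val_inj /(congr1 val) /= e; apply: val_inj. Qed.
Definition code : 'I_N -> {ffun 'I_d -> 'I_n} := finj hN.

Lemma fbijKV (X Y : finType) (h : #|X| = #|Y|) : cancel (fbij (esym h)) (fbij h).
Proof. by move=> x; rewrite /fbij enum_valK cast_ordKV enum_rankK. Qed.

Definition RndT := {ffun ('I_d * 'I_n) -> {ffun 'I_t -> {ffun 'I_l -> Fm}}}.

Definition decRec (x : L.-tuple bool) : {ffun 'I_w -> {ffun 'I_l -> Fm}} := fbij (esym hRec) x.
Definition encRec (y : {ffun 'I_w -> {ffun 'I_l -> Fm}}) : L.-tuple bool := fbij hRec y.

Definition pshare (i : 'I_N) (r : RndT) (j : 'I_k) : seq bool :=
  encS hSh (@shareF Fm l t d n N code i r (alp j)).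
Definition peval (j : 'I_k) (f : {ffun 'I_N -> L.-tuple bool}) (s : seq bool) : seq bool :=
  encS hAns [ffun c : 'I_w => @ansF Fm l d n N code (fun i => decRec (f i) c) (alp j) (decS hSh s)].
Definition precon (i : 'I_N) (r : RndT) (ys : 'I_k -> seq bool) : L.-tuple bool :=
  encRec [ffun c : 'I_w => [ffun e : 'I_l =>
    ((interp alp (fun j => decS hAns (ys j) c))`_(d * t + (l.-1 - e)))%R]].

Definition pir : PIR k N L := @MkPIR k N L RndT pshare peval precon.

Lemma pir_ok : is_PIR pir t.
Proof.
split.
- by apply/card_gt0P; exists [ffun _ => [ffun _ => [ffun _ => 0%R]]].
- move=> f i0 r /=; rewrite /precon /peval /pshare.
  rewrite -[RHS](fbijKV hRec); congr (fbij hRec _).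
  apply/ffunP => c; apply/ffunP => e; rewrite !ffunE.
  have [G [sG cG eG]] := @correct Fm l t d n N code l0 (@finj_inj _ _ hN)
     (fun i => decRec (f i) c) i0 r.
  rewrite -cG; congr (nth _ _ _); congr (polyseq _); symmetry; apply: interp_unique.
  + exact: alp_inj.
  + by rewrite -kdl.
  + by move=> j; rewrite encSK ffunE encSK eG.
- move=> T cT i i' v /=.
  set dd := dl l t alp code i' i T.
  rewrite -(card_preimset _ (@radd_inj Fm l t d n dd)).
  congr (#|pred_of_set _|); apply/setP => r; rewrite !inE.
  apply: eq_forallb => j; case jT : (j \in T) => //=.
  by rewrite /pshare (priv_shift code alp_inj).
Qed.

Lemma pir_upload : upload pir = k * (m * l * (d * n)).
Proof.
rewrite /upload (eq_bigr (fun _ => k * (m * l * (d * n)))) => [|i _].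
  exact: (@maxc _ _ _ (Ordinal N0)).
rewrite (eq_bigr (fun _ => k * (m * l * (d * n)))) => [|r _].
  exact: (@maxc _ _ _ ([ffun _ => [ffun _ => [ffun _ => 0%R]]] : RndT)).
rewrite (eq_bigr (fun _ => m * l * (d * n))); last by move=> j _; rewrite /= /pshare size_encS.
by rewrite sum_nat_const card_ord.
Qed.

Lemma pir_download : download pir = k * (m * w).
Proof.
rewrite /download (eq_bigr (fun _ => k * (m * w))) => [|f _].
  exact: (@maxc _ _ _ ([ffun _ => [tuple of nseq L false]] : {ffun 'I_N -> L.-tuple bool})).
rewrite (eq_bigr (fun _ => k * (m * w))) => [|i _].
  exact: (@maxc _ _ _ (Ordinal N0)).
rewrite (eq_bigr (fun _ => k * (m * w))) => [|r _].
  exact: (@maxc _ _ _ ([ffun _ => [ffun _ => [ffun _ => 0%R]]] : RndT)).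
rewrite (eq_bigr (fun _ => m * w)); last by move=> j _; rewrite /= /peval size_encS.
by rewrite sum_nat_const card_ord.
Qed.

End Protocol.


Lemma INR_muln (a b : nat) : INR (muln a b) = Rmult (INR a) (INR b).
Proof. exact: mult_INR. Qed.

Delimit Scope R_scope with R.
Theorem mainTheorem8 :
  exists C : R, (0 < C)%R /\
  forall d t k w N : nat,
    0 < d -> 0 < t -> 0 < k -> 0 < w -> 0 < N -> d * t + 1 <= k ->
    exists P : PIR k N (w * (k - d * t) * clog2 k),
      is_PIR P t /\
      (INR (upload P) <= C * INR k ^ 3 * ln (INR k) * Rpower (INR N) (/ INR d))%R /\
      download P = w * k * clog2 k /\
      download_rate P = (1 - INR (d * t) / INR k)%R.
Proof.
exists 8%R; split; first lra.
move=> d t k w N d0 t0 k0 w0 N0 hdtk.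
have dt1 : 1 <= d * t by rewrite muln_gt0 d0 t0.
have k2 : 2 <= k by apply: leq_trans hdtk; rewrite addn1 ltnS.
have dk : d <= k.
  apply: leq_trans hdtk; apply: leq_trans (leq_addr 1 _).
  by rewrite -{1}(muln1 d) leq_mul2l t0 orbT.
set l := k - d * t; set m := clog2 k.
have kdl : d * t + l = k by rewrite /l subnKC //; apply: leq_trans hdtk; apply: leq_addr.
have l0 : 0 < l by rewrite /l subn_gt0; apply: leq_trans hdtk; rewrite addn1.
have m0 : 0 < m by rewrite /m /clog2 up_log_gt0 /= (leq_trans _ k2).
have [Fm _ cardF] := @pPrimePowerField 2 m (isT : prime 2) m0.
have ex : exists n, N <= expn n d.
  by exists N; rewrite -{1}(expn1 N) leq_pexp2l.
case: (ex_minnP ex) => n Nn nmin.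
have n0 : 0 < n.
  rewrite lt0n; apply/eqP => e; move: Nn; rewrite e exp0n // leqn0 => /eqP eN.
  by rewrite eN in N0.
have hnm : expn n.-1 d < N.
  rewrite ltnNge; apply/negP => h; have := nmin _ h.
  by rewrite leqNgt ltn_predL n0.
have hk' : k <= #|Fm| by rewrite cardF; exact: up_logP.
have hN' : #|'I_N| <= #|{ffun 'I_d -> 'I_n}| by rewrite card_ffun !card_ord.
have hSh : #|{ffun ('I_d * 'I_n) -> {ffun 'I_l -> Fm}}| = #|{: (m * l * (d * n)).-tuple bool}|.
  by rewrite !card_ffun card_prod !card_ord cardF card_tuple card_bool -!expnM mulnA.
have hAns : #|{ffun 'I_w -> Fm}| = #|{: (m * w).-tuple bool}|.
  by rewrite !card_ffun !card_ord cardF card_tuple card_bool -!expnM.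
have hRec : #|{ffun 'I_w -> {ffun 'I_l -> Fm}}| = #|{: (w * (k - d * t) * clog2 k).-tuple bool}|.
  rewrite !card_ffun !card_ord cardF card_tuple card_bool -!expnM -/l -/m.
  congr expn; nia.
exists (pir t hk' hN' hSh hAns hRec).
split; [exact: pir_ok | split; [|split]].
- rewrite pir_upload // !INR_muln; apply: prod_bound.
  + split; first exact: pos_INR.
    apply: m_bound => //; exact: up_log_gtn.
  + split; first exact: pos_INR.
    by apply: le_INR; apply/leP; apply: leq_subr.
  + split; first exact: pos_INR.
    by apply: le_INR; apply/leP.
  + split; first exact: pos_INR.
    exact: n_bound.
  + exact: pos_INR.
- rewrite pir_download //; nia.
- rewrite /download_rate pir_download //; exact: rate_eq.
Qed.
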